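(* Let $\mathbf p$ be a map with simple boundary having $f$ interior faces, and let $v$ be the maximal valency of an interior face of $\mathbf p$. Then in any rooted planar map $\mathbf m$, every occurrence of $\mathbf p$ intersects at most $vf^2$ other occurrences of $\mathbf p$.
   Context: A planar map is a connected planar multigraph (loops and multiple edges allowed) embedded in the sphere. It is rooted if one edge is oriented, and the root face is the face to the left of the root edge. The valency of a face is the number of incident edges, bridges counted twice. A map with simple boundary is a rooted planar map whose root face is bounded by a cycle. Its other faces are interior faces. An occurrence of $\mathbf p$ in $\mathbf m$ is given by a cycle $C$ of $\mathbf m$ such that the closed region bounded by $C$ on the side not containing the root face of $\mathbf m$, with all vertices and edges inside, forms a map isomorphic to $\mathbf p$ with $C$ corresponding to the root face boundary of $\mathbf p$. The isomorphism must preserve the root face, not necessarily the root edge, and occurrences are identified with their set of interior faces. Two occurrences intersect if they share an interior face. *)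

(* Defs.v *)
From mathcomp Require Import all_boot all_fingroup.
Set Implicit Arguments. Unset Strict Implicit. Unset Printing Implicit Defensive.

(* A rooted combinatorial map: darts (half-edges), the edge involution
   [alpha], the vertex rotation [sigma], and a root dart. *)
Record rmap := RMap {
  dart : finType;
  alpha : {perm dart};
  sigma : {perm dart};
  root : dart }.

(* Face permutation: phi x = sigma (alpha x)  (perm product applies left first). *)
Definition phi (m : rmap) : {perm dart m} := (alpha m * sigma m)%g.

(* Vertices / faces are the cycles of sigma / phi; edges are pairs of darts. *)
Definition vertex_of (m : rmap) (x : dart m) : {set dart m} := porbit (sigma m) x.
Definition face_of (m : rmap) (x : dart m) : {set dart m} := porbit (phi m) x.

(* A rooted planar map: alpha is a fixed-point-free involution, the map is
   connected, and Euler's formula V - E + F = 2 holds (genus 0). *)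
Definition is_planar_map (m : rmap) : Prop :=
  (forall x : dart m, alpha m (alpha m x) = x /\ alpha m x <> x) /\
  (forall x y : dart m,
      connect (fun a b => (b == alpha m a) || (b == sigma m a)) x y) /\
  #|porbits (sigma m)| + #|porbits (phi m)| = #|dart m| %/ 2 + 2.

Definition root_face (m : rmap) : {set dart m} := face_of (root m).

Definition interior (m : rmap) : {set dart m} := ~: root_face m.

(* Simple boundary: the boundary walk of the root face is a cycle, i.e. no
   edge is traversed twice and all visited vertices are distinct. *)
Definition has_simple_boundary (p : rmap) : Prop :=
  is_planar_map p /\
  (forall x, x \in root_face p -> alpha p x \notin root_face p) /\
  (forall x y, x \in root_face p -> y \in root_face p -> x != y ->
     vertex_of x != vertex_of y).

(* An embedding of the closed region of p (everything but its root face) into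
   m, as the inside of a cycle of m not containing the root face of m. *)
Definition embedding (p m : rmap) (g : dart p -> dart m) : Prop :=
  {in interior p &, injective g} /\
  (forall x, x \in interior p -> g (phi p x) = phi m (g x)) /\
  (forall x, x \in interior p -> alpha p x \in interior p ->
     g (alpha p x) = alpha m (g x)) /\
  (forall x, x \in interior p -> alpha p x \notin interior p ->
     alpha m (g x) \notin g @: interior p) /\
  (forall x y, x \in interior p -> y \in interior p ->
     g y \in vertex_of (g x) -> y \in vertex_of x) /\
  root m \notin g @: interior p.

(* An occurrence, identified with its set of interior faces (represented by
   the union of their darts). *)
Definition is_occurrence (p m : rmap) (S : {set dart m}) : Prop :=
  exists g : dart p -> dart m, embedding g /\ S = g @: interior p.

Arguments is_occurrence p m S : clear implicits.

Definition n_interior_faces (p : rmap) : nat :=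
  #|[set face_of x | x in interior p]|.

(* valency of a face = number of darts in it (bridges counted twice) *)
Definition max_interior_valency (p : rmap) : nat :=
  \max_(x in interior p) #|face_of x|.

(* Main.v *)
From mathcomp Require Import all_boot all_fingroup.
Set Implicit Arguments. Unset Strict Implicit. Unset Printing Implicit Defensive.

From Stdlib Require Import ClassicalEpsilon.
Require Import Defs.
Lemma cyc_conn (T : finType) (s : {perm T}) (P : pred T) (R : rel T) :
  connect_sym R ->
  (forall y, P y -> P (s y) -> connect R y (s y)) ->
  (forall a b, ~~ P a -> ~~ P b -> b \in porbit s a -> a = b) ->
  forall y w, P y -> P w -> w \in porbit s y -> connect R y w.
Proof.
move=> Rs Hst Hu y w Py Pw.
case: (boolP [forall z in porbit s y, P z]) => [/forall_inP allP | /forall_inPn [r ry nPr]].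
  rewrite porbit_traject => /trajectP [i _ ->].
  elim: i => [|i IH] /=; first exact: connect0.
  apply: connect_trans IH _; apply: Hst; apply: allP.
    by rewrite -permX mem_porbit.
  by rewrite -permX -permM -expgSr mem_porbit.
move=> wy.
have yr : y \in porbit s r by rewrite porbit_sym.
have wr : w \in porbit s r.
  by move: yr; rewrite -eq_porbit_mem => /eqP <-.
set n := #|porbit s r|.
have Ut := uniq_traject_porbit s r.
have key : forall i, 0 < i < n -> P (iter i s r).
  move=> i /andP [i0 iN]; apply/negPn/negP => nP.
  have := Hu r (iter i s r) nPr nP; rewrite -permX mem_porbit => /(_ isT).
  rewrite permX => E.
  have h0 : 0 < n := leq_ltn_trans (leq0n i) iN.
  have hs : i < size (traject s r n) by rewrite size_traject.
  have hs0 : 0 < size (traject s r n) by rewrite size_traject.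
  have := @nth_uniq _ r (traject s r n) 0 i hs0 hs Ut.
  rewrite !nth_traject //= -E eqxx => /esym /eqP.
  by move=> i0E; rewrite -i0E in i0.
move: yr wr; rewrite !porbit_traject => /trajectP [a aN yE] /trajectP [b bN wE].
have a0 : 0 < a by case: a aN yE => // _ yE; rewrite yE /= (negbTE nPr) in Py.
have b0 : 0 < b by case: b bN wE => // _ wE; rewrite wE /= (negbTE nPr) in Pw.
rewrite yE wE.
have gen : forall a b, 0 < a -> b < n -> a <= b -> connect R (iter a s r) (iter b s r).
  move=> a' b' a0' bN' ab.
  suff: forall k, a' + k <= b' -> connect R (iter a' s r) (iter (a' + k) s r).
    by move=> /(_ (b' - a')); rewrite subnKC //; apply.
  elim=> [|k IH] hk; first by rewrite addn0 connect0.
  rewrite addnS in hk *.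
  have hk1 : a' + k < n := ltn_trans hk bN'.
  have hk2 : (a' + k).+1 < n := leq_ltn_trans hk bN'.
  apply: connect_trans (IH (ltnW hk)) _; apply: Hst; [apply: key|apply: (key (a' + k).+1)].
    by rewrite hk1 andbT (leq_trans a0' (leq_addr _ _)).
  by rewrite hk2.
case: (leqP a b) => ab; first exact: gen.
by rewrite Rs; apply: gen => //; apply: ltnW.
Qed.

Lemma porbit_same (T : finType) (s : {perm T}) x y r :
  y \in porbit s x -> (y \in porbit s r) = (x \in porbit s r).
Proof.
move=> yx; rewrite -!eq_porbit_mem.
by move: yx; rewrite -eq_porbit_mem => /eqP ->.
Qed.

Lemma porbit_step (T : finType) (s : {perm T}) x : s x \in porbit s x.
Proof. by have := mem_porbit s 1 x; rewrite expg1. Qed.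

Section P.
Variable p : rmap.
Hypothesis Pp : is_planar_map p.
Hypothesis rootA : forall x, x \in root_face p -> alpha p x \notin root_face p.
Hypothesis rootV : forall x y, x \in root_face p -> y \in root_face p -> x != y ->
     vertex_of x != vertex_of y.

Let I := interior p.

Lemma alphaK x : alpha p (alpha p x) = x.
Proof. by case: Pp => H _; case: (H x). Qed.

Lemma sigmaE x : sigma p x = phi p (alpha p x).
Proof. by rewrite /phi permM alphaK. Qed.

Lemma inI x : (x \in I) = (x \notin root_face p).
Proof. by rewrite /I /interior in_setC. Qed.

Lemma face_root x y : y \in face_of x -> (y \in root_face p) = (x \in root_face p).
Proof. exact: porbit_same. Qed.

Lemma phi_root x : (phi p x \in root_face p) = (x \in root_face p).
Proof. apply: face_root; exact: porbit_step. Qed.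

Lemma phiI x : (phi p x \in I) = (x \in I).
Proof. by rewrite !inI phi_root. Qed.

Lemma iter_phiI k x : (iter k (phi p) x \in I) = (x \in I).
Proof. by elim: k => //= k IH; rewrite phiI. Qed.

Lemma faceI x y : y \in face_of x -> (y \in I) = (x \in I).
Proof. by move=> yx; rewrite !inI (face_root yx). Qed.

Definition R : rel (dart p) := fun a b =>
  [&& a \in I, b \in I & [|| b == phi p a, a == phi p b | b == alpha p a]].

Lemma R_sym : symmetric R.
Proof.
move=> a b; rewrite /R; case: (a \in I); case: (b \in I) => //=.
have -> : (b == alpha p a) = (a == alpha p b).
  by apply/eqP/eqP => ->; rewrite alphaK.
by case: (b == phi p a); case: (a == phi p b).
Qed.

Lemma connR_sym : connect_sym R.
Proof. exact: sym_connect_sym R_sym. Qed.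

Lemma stepA a : a \in I -> sigma p a \in I -> connect R a (sigma p a).
Proof.
move=> aI sI.
have aaI : alpha p a \in I.
  by move: sI; rewrite sigmaE phiI.
apply: (@connect_trans _ _ (alpha p a)); apply: connect1.
  by rewrite /R aI aaI eqxx !orbT.
by rewrite /R aaI sigmaE phiI aaI eqxx.
Qed.

Lemma root_uniq a b : a \in root_face p -> b \in root_face p ->
  b \in porbit (sigma p) a -> a = b.
Proof.
move=> ar br ba; apply/eqP; apply: contraTT ba => ab.
have := rootV ar br ab; rewrite /vertex_of eq_sym eq_porbit_mem.
by apply: contraNN.
Qed.

Lemma vertex_conn a b : a \in I -> b \in I -> b \in porbit (sigma p) a ->
  connect R a b.
Proof.
apply: (@cyc_conn _ (sigma p) [pred x | x \in I]) => //.
- exact: connR_sym.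
- exact: stepA.
move=> x y /=; rewrite !inI !negbK; exact: root_uniq.
Qed.

Definition rep z := if z \in I then z else alpha p z.

Lemma repI z : rep z \in I.
Proof.
rewrite /rep; case: ifP => // /negbT; rewrite inI negbK => zr.
by rewrite inI rootA.
Qed.

Lemma rep_step a b : (b == alpha p a) || (b == sigma p a) ->
  connect R (rep a) (rep b).
Proof.
case/orP => /eqP ->.
  rewrite /rep; case: ifP => aI; case: ifP => aaI; rewrite ?alphaK //.
  - by apply: connect1; rewrite /R aI aaI eqxx !orbT.
  - by move: (repI a); rewrite /rep aI aaI.
rewrite /rep; case: ifP => aI; case: ifP => sI.
- exact: stepA.
-
  have sr : sigma p a \in root_face p by rewrite -[_ \in root_face p]negbK -inI sI.
  set r := sigma p a in sr *.
  have arI : alpha p r \in I by rewrite inI rootA.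
  have srI : sigma p r \in I.
    rewrite inI; apply/negP => srr.
    have E : r = sigma p r.
      by apply: root_uniq => //; exact: porbit_step.
    have : sigma p a = sigma p r by rewrite -E.
    move/perm_inj => ar; move: aI; rewrite ar /r inI sr //.
  apply: (@connect_trans _ _ (sigma p r)).
    apply: vertex_conn => //.
    have h : r \in porbit (sigma p) a by exact: porbit_step.
    have h2 : sigma p r \in porbit (sigma p) r by exact: porbit_step.
    by move/porbit_same: h2 ->.
  rewrite connR_sym; apply: connect1.
  by rewrite /R arI srI sigmaE alphaK eqxx.
- have aaI : alpha p a \in I by move: (repI a); rewrite /rep aI.
  apply: connect1; rewrite /R aaI sI sigmaE eqxx //.
- have ar : a \in root_face p by rewrite -[_ \in root_face p]negbK -inI aI.
  have sr : sigma p a \in root_face p by rewrite -[_ \in root_face p]negbK -inI sI.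
  rewrite -(@root_uniq a (sigma p a)) //.
  exact: porbit_step.
Qed.

Lemma I_conn u y : u \in I -> y \in I -> connect R u y.
Proof.
move=> uI yI.
case: Pp => _ [Hc _].
have : connect R (rep u) (rep y).
  move: (Hc u y) => /connectP [q pq ->].
  elim: q u pq {uI} => [|z q IH] u /=; first by move=> _; exact: connect0.
  case/andP => uz pq.
  apply: connect_trans (IH _ pq); exact: rep_step.
by rewrite /rep uI yI.
Qed.

End P.

Lemma card_rel (A B : finType) (T : {set A}) (K : {set B}) (Q : A -> B -> Prop) :
  (forall a, a \in T -> exists b, b \in K /\ Q a b) ->
  (forall a1 a2 b, a1 \in T -> a2 \in T -> Q a1 b -> Q a2 b -> a1 = a2) ->
  #|T| <= #|K|.
Proof.
move=> Hex Hf.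
pose Qb a b := if excluded_middle_informative (Q a b) then true else false.
have QbP a b : Qb a b -> Q a b.
  by rewrite /Qb; case: excluded_middle_informative.
pose f a := [pick b in K | Qb a b].
have fS a : a \in T -> exists2 b, f a = Some b & b \in K /\ Q a b.
  move=> aT; rewrite /f; case: pickP => [b /andP [bK /QbP qb]|none].
    by exists b.
  have [b [bK qb]] := Hex a aT.
  have := none b; rewrite bK /Qb; case: excluded_middle_informative => //.
have finj : {in T &, injective f}.
  move=> a1 a2 a1T a2T E.
  have [b1 E1 [_ q1]] := fS a1 a1T; have [b2 E2 [_ q2]] := fS a2 a2T.
  move: E; rewrite E1 E2 => [[E]]; rewrite -E in q2.
  exact: Hf q1 q2.
rewrite -(card_in_imset finj) -(card_imset K (@Some_inj _)).
apply: subset_leq_card; apply/subsetP => _ /imsetP [a aT ->].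
have [b -> [bK _]] := fS a aT; exact: imset_f.
Qed.

Section Main.
Variables p m : rmap.
Let I := interior p.

Lemma emb_iter (g : dart p -> dart m) k x : embedding g -> x \in I ->
  g (iter k (phi p) x) = iter k (phi m) (g x).
Proof.
move=> [_ [Hphi _]] xI; elim: k => //= k IH.
by rewrite Hphi ?iter_phiI // IH.
Qed.

Lemma emb_agree (g1 g2 : dart p -> dart m) u :
  has_simple_boundary p -> embedding g1 -> embedding g2 -> u \in I ->
  g1 u = g2 u -> {in I, g1 =1 g2}.
Proof.
move=> [Pp [rA rV]] [_ [H1p [H1a _]]] [_ [H2p [H2a _]]] uI E y yI.
have := I_conn Pp rA rV uI yI => /connectP [q pq ->].
elim: q u pq E {uI yI} => [|z q IH] u //= /andP [uz pq] E.
apply: IH pq _.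
move: uz; rewrite /R => /and3P [uI zI /or3P [] /eqP Ez].
- by rewrite Ez H1p // H2p // E.
- apply: (@perm_inj _ (phi m)).
  by rewrite -H1p // -H2p // -Ez.
- have aI : alpha p u \in I by rewrite -Ez.
  by rewrite Ez H1a // H2a // E.
Qed.

Definition canon (F : {set dart p}) := odflt (root p) [pick x in F].

Lemma canonP x : exists k, canon (face_of x) = iter k (phi p) x.
Proof.
rewrite /canon; case: pickP => [y yF | none] /=.
  by move: yF => /porbitP [k ->]; exists k; rewrite permX.
by have := none x; rewrite porbit_id.
Qed.

Lemma card_I : #|I| <= max_interior_valency p * n_interior_faces p.
Proof.
set faces := [set face_of x | x in I].
have sub : I \subset cover faces.
  apply/subsetP => x xI; apply/bigcupP; exists (face_of x).
    exact: imset_f.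
  exact: porbit_id.
apply: leq_trans (subset_leq_card sub) _.
apply: leq_trans (leq_card_cover faces).1 _.
rewrite mulnC /n_interior_faces -/faces -sum_nat_const.
apply: leq_sum => _ /imsetP [x xI ->].
by rewrite /max_interior_valency (bigD1 x) //= leq_maxl.
Qed.

End Main.

Theorem mainTheorem6 (p m : rmap) :
  has_simple_boundary p -> is_planar_map m ->
  forall S : {set dart m}, is_occurrence p m S ->
  forall T : {set {set dart m}},
    (forall S', S' \in T ->
       [/\ is_occurrence p m S', S' != S & S' :&: S != set0]) ->
    #|T| <= max_interior_valency p * (n_interior_faces p) ^ 2.
Proof.
move=> Hp Pm S [g [Eg ->]] T HT.
set I := interior p.
set faces := [set face_of x | x in I].
pose Q (S' : {set dart m}) (k : {set dart p} * dart p) :=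
  exists g', embedding g' /\ S' = g' @: I /\ k.2 \in I /\ g' k.2 = g (canon k.1).
apply: leq_trans (@card_rel _ _ T (setX faces I) Q _ _) _.
- move=> S' /HT [[g' [Eg' ->]] _ /set0Pn [z /setIP [/imsetP [x' x'I ->] /imsetP [x xI Ex]]]].
  have [k Ek] := canonP x.
  exists (face_of x, iter k (phi p) x'); split.
    by rewrite in_setX imset_f //= iter_phiI.
  exists g'; split => //; split => //=; split; first by rewrite iter_phiI.
  by rewrite Ek !emb_iter // Ex.
- move=> S1 S2 [F x] _ _ [g1 [E1 [-> [/= xI G1]]]] [g2 [E2 [-> [_ G2]]]].
  apply: eq_in_imset; apply: (emb_agree Hp E1 E2 xI).
  by rewrite G1 G2.
rewrite cardsX expnS mulnA [max_interior_valency p * _]mulnC -mulnA leq_mul2l.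
by rewrite expn1 card_I orbT.
Qed.
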